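(* Let $\mathcal{B}$ be a finite relational structure with domain $B$ and let $b\in B$ be such that the shop $\exists_b$ is a she of $\mathcal{B}$. Let $\varphi(u,v_1,\ldots,v_k)$ be a formula of $\{\exists,\forall,\wedge,\vee\}$-FO. Then for all $x_1,\ldots,x_k\in B$: $\mathcal{B}\models\exists u\,\varphi(u,x_1,\ldots,x_k)$ if and only if $\mathcal{B}\models\varphi(b,x_1,\ldots,x_k)$.
   Context: $\{\exists,\forall,\wedge,\vee\}$-FO is the positive equality-free fragment of first-order logic over the signature of $\mathcal{B}$: formulas built from atomic formulas $R(w_1,\ldots,w_r)$ using only $\wedge,\vee,\exists,\forall$. A shop on $B$ is a map $f:B\to\mathcal{P}(B)\setminus\{\emptyset\}$ such that every $y\in B$ lies in some $f(x)$. A she of $\mathcal{B}$ is a shop $f$ such that for every relation $R$ of $\mathcal{B}$ of arity $i$, if $\mathcal{B}\models R(x_1,\ldots,x_i)$ then $\mathcal{B}\models R(y_1,\ldots,y_i)$ for all $y_j\in f(x_j)$. The shop $\exists_b$ is defined by $\exists_b(x)=\{x,b\}$ for all $x\in B$. *)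

(* Defs.v *)
From mathcomp Require Import all_boot.
Set Implicit Arguments.
Unset Strict Implicit.
Unset Printing Implicit Defensive.

Record relstruct := RelStruct {
  sym : finType;
  arity : sym -> nat;
  dom : finType;
  interp : forall R : sym, pred ((arity R).-tuple dom)
}.

Inductive formula (S : finType) (ar : S -> nat) : Type :=
| FAtom (R : S) (w : (ar R).-tuple nat)
| FAnd (f g : formula ar)
| FOr (f g : formula ar)
| FEx (x : nat) (f : formula ar)
| FAll (x : nat) (f : formula ar).

Definition upd (T : Type) (env : nat -> T) (x : nat) (a : T) : nat -> T :=
  fun y => if y == x then a else env y.

Fixpoint sat (B : relstruct) (env : nat -> dom B) (f : formula (@arity B))
  {struct f} : Prop :=
  match f with
  | FAtom R w => interp (map_tuple env w)
  | FAnd f g => sat env f /\ sat env g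
  | FOr f g => sat env f \/ sat env g
  | FEx x f => exists a : dom B, sat (upd env x a) f
  | FAll x f => forall a : dom B, sat (upd env x a) f
  end.

Fixpoint fv (S : finType) (ar : S -> nat) (f : formula ar) : seq nat :=
  match f with
  | FAtom _ w => val w
  | FAnd f g => fv f ++ fv g
  | FOr f g => fv f ++ fv g
  | FEx x f => filter (fun y => y != x) (fv f)
  | FAll x f => filter (fun y => y != x) (fv f)
  end.

Definition shop (T : finType) (f : T -> {set T}) : Prop :=
  (forall x, f x != set0) /\ (forall y, exists x, y \in f x).

Definition she (B : relstruct) (f : dom B -> {set dom B}) : Prop :=
  shop f /\
  forall (R : sym B) (x y : (arity R).-tuple (dom B)),
    interp x -> (forall j : 'I_(arity R), tnth y j \in f (tnth x j)) -> interp y.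

Definition exists_shop (T : finType) (b : T) : T -> {set T} :=
  fun x => [set x; b].

(* Convention for phi(u, v_1, ..., v_k): u is variable 0, v_i is variable i.
   env a xs assigns a to u and xs_i to v_i (other variables: a, irrelevant). *)
Definition env_of (T : Type) (k : nat) (a : T) (xs : k.-tuple T) : nat -> T :=
  fun n => match n with 0 => a | i.+1 => nth a xs i end.

(* Main.v *)
Require Import Defs.
From mathcomp Require Import all_boot.

Lemma sat_shift (B : relstruct) (b : dom B) (f : formula (@arity B)) :
  she (exists_shop b) ->
  forall env env' : nat -> dom B,
    (forall v, env' v \in exists_shop b (env v)) ->
    sat env f -> sat env' f.
Proof.
move=> [_ Hshe]; elim: f => [R w|f IHf g IHg|f IHf g IHg|x f IHf|x f IHf] env env' H /=.
- move=> Hi; apply: (Hshe R (map_tuple env w)) => // j.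
  by rewrite !tnth_map.
- by case=> [/IHf Hf /IHg Hg]; split; [apply: Hf|apply: Hg].
- by case=> [/IHf Hf|/IHg Hg]; [left; apply: Hf|right; apply: Hg].
- case=> a Ha; exists a; apply: (IHf (upd env x a)) => // v.
  rewrite /upd; case: (v == x) => //.
  by rewrite /exists_shop !inE eqxx.
- move=> Ha a; apply: (IHf (upd env x a)) => // v.
  rewrite /upd; case: (v == x) => //.
  by rewrite /exists_shop !inE eqxx.
Qed.

Theorem lemma3p2 (B : relstruct) (b : dom B) (k : nat)
  (phi : formula (@arity B)) :
  she (exists_shop b) ->
  (forall v, v \in fv phi -> v <= k) ->
  forall xs : k.-tuple (dom B),
    sat (env_of b xs) (FEx 0 phi) <-> sat (env_of b xs) phi.
Proof.
move=> Hs _ xs; split => /=.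
- case=> a Ha; apply: (@sat_shift B b phi Hs (upd (env_of b xs) 0 a) (env_of b xs) _ Ha) => v.
  rewrite /upd /exists_shop !inE; case: v => [|v] //=.
  by rewrite eqxx orbT.
  by rewrite eqxx.
- move=> H; exists b; apply: (@sat_shift B b phi Hs (env_of b xs) (upd (env_of b xs) 0 b) _ H) => v.
  rewrite /upd /exists_shop !inE; case: v => [|v] //=; by rewrite eqxx.
Qed.
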